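(* Let $(X,d)$ be a complete metric space and $(\mathbb{H}(X),h)$ the space of nonempty compact subsets of $X$ with the Hausdorff metric. For each $i\in\mathbb{N}$ let $\mathcal{F}_i=\{X; f_{1,i},\dots,f_{n_i,i}\}$ be a family of Lipschitz maps $f_{r,i}:X\to X$ with set map $\mathcal{F}_i(A)=\bigcup_{r=1}^{n_i} f_{r,i}(A)$ and $L_{\mathcal{F}_i}=\max_r\mathrm{Lip}(f_{r,i})$, where $\lim_{k\to\infty}\prod_{i=1}^kL_{\mathcal{F}_i}=0$. Assume there exists a compact set $C\subseteq X$ with $f_{r,i}(C)\subseteq C$ for all $r=1,\dots,n_i$, $i\in\mathbb{N}$, and assume $\sum_{k=1}^\infty\prod_{i=1}^k L_{\mathcal{F}_i}<\infty$. Then there is a unique set $P\subseteq C$ such that for every nonempty compact $A\subseteq C$, the backward trajectory $\Psi_k(A)=\mathcal{F}_1\circ\mathcal{F}_2\circ\cdots\circ\mathcal{F}_k(A)$ converges to $P$ in $(\mathbb{H}(X),h)$.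
   Context: The Hausdorff metric is $h(B,C)=\max\{d(B,C),d(C,B)\}$ with $d(B,C)=\sup_{b\in B}\inf_{c\in C}d(b,c)$. *)

(* Defs.v *)
From HB Require Import structures.
From mathcomp Require Import all_boot all_order all_algebra.
From mathcomp Require Import all_classical all_reals all_analysis.
Set Implicit Arguments. Unset Strict Implicit. Unset Printing Implicit Defensive.
Import Order.TTheory GRing.Theory Num.Theory numFieldTopology.Exports numFieldNormedType.Exports.
Local Open Scope classical_set_scope.
Local Open Scope ring_scope.

Definition complete_space (X : uniformType) : Prop :=
  forall F : set_system X, ProperFilter F -> cauchy F -> exists x : X, F --> x.

Definition lipschitz_with (R : realType) (X : metricType R) (L : R) (f : X -> X) :=
  forall x y : X, mdist (f x) (f y) <= L * mdist x y.

Definition lip_const (R : realType) (X : metricType R) (f : X -> X) : R :=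
  inf [set L : R | 0 <= L /\ lipschitz_with L f].

Definition hdist (R : realType) (X : metricType R) (B C : set X) : R :=
  sup [set inf [set mdist b c | c in C] | b in B].

Definition hausdorff (R : realType) (X : metricType R) (B C : set X) : R :=
  Num.max (hdist B C) (hdist C B).

Definition in_HX (R : realType) (X : metricType R) (A : set X) : Prop :=
  A !=set0 /\ compact A.

Definition cvg_H (R : realType) (X : metricType R) (S : nat -> set X) (P : set X) : Prop :=
  in_HX P /\ (fun k => hausdorff (S k) P) @ \oo --> (0 : R).

(* set map F_i(A) = \bigcup_{r < n_i} f_{r,i}(A)  (indices shifted to start at 0) *)
Definition Fset (R : realType) (X : metricType R) (n : nat -> nat)
  (f : nat -> nat -> X -> X) (i : nat) (A : set X) : set X :=
  \bigcup_(r in [set r : nat | (r < n i)%N]) (f i r @` A).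

Definition LF (R : realType) (X : metricType R) (n : nat -> nat)
  (f : nat -> nat -> X -> X) (i : nat) : R :=
  \big[Num.max/0]_(r < n i) lip_const (f i r).

Definition Psi (R : realType) (X : metricType R) (n : nat -> nat)
  (f : nat -> nat -> X -> X) (k : nat) (A : set X) : set X :=
  foldr (fun i S => Fset n f i S) A (iota 0 k).

(* Main.v *)
Require Import Defs.
From HB Require Import structures.
From mathcomp Require Import all_boot all_order all_algebra.
From mathcomp Require Import all_classical all_reals all_analysis.
From mathcomp Require Import lra.
Import Order.TTheory GRing.Theory Num.Theory numFieldTopology.Exports numFieldNormedType.Exports.
Local Open Scope classical_set_scope.
Local Open Scope ring_scope.
Set Implicit Arguments. Unset Strict Implicit.

Section Aux.
Context (R : realType) (X : metricType R).
Implicit Types (A B : set X).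

Definition near_sub (e : R) (A B : set X) :=
  forall a, A a -> exists b, B b /\ mdist a b <= e.

Lemma mdC (x y : X) : mdist x y = mdist y x.
Proof. exact: metric_sym. Qed.

Lemma mdT (y x z : X) : mdist x z <= mdist x y + mdist y z.
Proof. exact: metric_triangle. Qed.

Lemma hdist_le (e : R) A B : A !=set0 -> B !=set0 ->
  (forall a, A a -> forall d, 0 < d -> exists b, B b /\ mdist a b <= e + d) ->
  0 <= hdist A B /\ hdist A B <= e.
Proof.
move=> [a0 Aa0] [b0 Bb0] H.
have infge0 : forall a, 0 <= inf [set mdist a c | c in B].
  move=> a; apply: lb_le_inf; first by exists (mdist a b0), b0.
  by move=> _ [c Bc <-]; exact: mdist_ge0.
have infle : forall a, A a -> inf [set mdist a c | c in B] <= e.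
  move=> a Aa; apply/ler_addgt0Pr => d d0.
  have [b [Bb hb]] := H a Aa d d0.
  apply: le_trans hb; apply: ge_inf; last by exists b.
  by exists 0 => _ [c _ <-]; exact: mdist_ge0.
have ub : ubound [set inf [set mdist b c | c in B] | b in A] e.
  by move=> _ [a Aa <-]; exact: infle.
rewrite /hdist; split.
  apply: le_trans (infge0 a0) _; apply: ub_le_sup; first by exists e.
  by exists a0.
by apply: ge_sup => //; exists (inf [set mdist a0 c | c in B]), a0.
Qed.

Lemma hdist_extract (D e : R) A B a : B !=set0 ->
  (forall x y, A x -> B y -> mdist x y <= D) ->
  A a -> hdist A B < e -> exists b, B b /\ mdist a b < e.
Proof.
move=> [b0 Bb0] HD Aa He.
have hinf : inf [set mdist a c | c in B] < e.
  apply: le_lt_trans He; apply: ub_le_sup; last by exists a.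
  exists D => _ [x Ax <-]; apply: le_trans (HD x b0 Ax Bb0).
  by apply: ge_inf; [exists 0 => _ [c _ <-]; exact: mdist_ge0 | exists b0].
have [_ [b Bb <-] hb] := inf_lt (ex_intro _ (mdist a b0) (ex_intro2 _ _ b0 Bb0 erefl)) hinf.
by exists b.
Qed.

End Aux.
Section Maps.
Context (R : realType) (X : metricType R) (n : nat -> nat) (f : nat -> nat -> X -> X).
Hypothesis hlip : forall i r, (r < n i)%N -> exists L : R, lipschitz_with L (f i r).

Lemma lip_const_ok i r : (r < n i)%N ->
  0 <= lip_const (f i r) /\ lipschitz_with (lip_const (f i r)) (f i r).
Proof.
move=> hr; have [L HL] := hlip hr.
pose S := [set L : R | 0 <= L /\ lipschitz_with L (f i r)].
have S0 : S !=set0.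
  exists (Num.max L 0); split; first by rewrite le_max lexx orbT.
  move=> x y; apply: le_trans (HL x y) _; apply: ler_wpM2r; first exact: mdist_ge0.
  by rewrite le_max lexx.
have ge0 : 0 <= inf S by apply: lb_le_inf => // z [].
rewrite /lip_const -/S; split => // x y.
apply/ler_addgt0Pr => e e0.
set d := mdist x y.
have d0 : 0 <= d by exact: mdist_ge0.
have d1 : 0 < d + 1 by rewrite ltr_wpDl.
have e'0 : 0 < e / (d + 1) by rewrite divr_gt0.
have hlt : inf S < inf S + e / (d + 1) by rewrite ltrDl.
have [L' [L'0 HL'] hL'] := inf_lt S0 hlt.
apply: le_trans (HL' x y) _.
apply: le_trans (ler_wpM2r d0 (ltW hL')) _.
rewrite mulrDl lerD2l mulrAC ler_pdivrMr // ler_pM2l // lerDl //.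
Qed.

Lemma LF_ge0 i : 0 <= LF n f i.
Proof.
rewrite /LF; elim/big_ind: _ => //.
  by move=> a b a0 _; rewrite le_max a0.
by move=> r _; case: (lip_const_ok (ltn_ord r)).
Qed.

Lemma lip_le_LF {i r} (hr : (r < n i)%N) : lip_const (f i r) <= LF n f i.
Proof. by rewrite /LF (bigD1 (Ordinal hr)) //= le_max lexx. Qed.

Lemma near_Fset e i A B : 0 <= e -> near_sub e A B ->
  near_sub (LF n f i * e) (Fset n f i A) (Fset n f i B).
Proof.
move=> e0 H _ [r hr [a Aa <-]].
have [b [Bb hb]] := H a Aa.
exists (f i r b); split; first by exists r => //; exists b.
have [l0 hl] := lip_const_ok hr.
apply: le_trans (hl a b) _.
apply: le_trans (ler_wpM2l l0 hb) _.
by rewrite ler_wpM2r // (lip_le_LF hr).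
Qed.

Definition G (s : seq nat) (A : set X) := foldr (fun i S => Fset n f i S) A s.

Lemma near_G s e A B : 0 <= e -> near_sub e A B ->
  near_sub ((\prod_(i <- s) LF n f i) * e) (G s A) (G s B).
Proof.
move=> e0 H; elim: s => [|i s IH] /=; first by rewrite big_nil mul1r.
rewrite big_cons -mulrA; apply: near_Fset => //.
by rewrite mulr_ge0 // prodr_ge0 // => j _; exact: LF_ge0.
Qed.

Lemma PsiE k A : Psi n f k A = G (iota 0 k) A.
Proof. by []. Qed.

Lemma Psi_split k m A : (k <= m)%N -> Psi n f m A = Psi n f k (G (iota k (m - k)) A).
Proof. by move=> km; rewrite /Psi -{1}(subnKC km) iotaD foldr_cat add0n. Qed.

Lemma prod_iota k : \prod_(i <- iota 0 k) LF n f i = \prod_(i < k) LF n f i.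
Proof.
have -> : iota 0 k = index_iota 0 k by rewrite /index_iota subn0.
by rewrite big_mkord.
Qed.

Lemma G_sub (C : set X) s A :
  (forall i r, (r < n i)%N -> f i r @` C `<=` C) -> A `<=` C -> G s A `<=` C.
Proof.
move=> hC AC; elim: s => [|i s IH] //= _ [r hr [a Aa <-]].
by apply: (hC i r hr); exists a => //; apply: IH.
Qed.

Lemma G_n0 s A : (forall i, (0 < n i)%N) -> A !=set0 -> G s A !=set0.
Proof.
move=> hn A0; elim: s => [|i s [a Ha]] //=.
by exists (f i 0%N a), 0%N => //=; exists a.
Qed.

End Maps.
Section Cl.
Context (R : realType) (X : metricType R).

Lemma cluster_seq (C : set X) (y : nat -> X) :
  compact C -> (forall m, C (y m)) ->
  exists p, C p /\ forall N e, 0 < e -> exists m, (N <= m)%N /\ mdist p (y m) < e.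
Proof.
move=> cC Cy.
have FC : (y @ \oo) C.
  by rewrite /fmap /=; apply: filterE.
have [p [Cp clp]] := cC (y @ \oo) _ FC.
exists p; split => // N e e0.
have FA : (y @ \oo) [set x | exists2 m, (N <= m)%N & x = y m].
  by apply: filterS (nbhs_infty_ge N) => m Nm; exists m.
have [_ [[m Nm ->] hb]] := clp _ _ FA (nbhsx_ballx p e e0).
by exists m; split => //; move: hb; rewrite ballEmdist.
Qed.

Lemma compact_bnd (C : set X) : compact C ->
  exists D, 0 <= D /\ forall x y, C x -> C y -> mdist x y <= D.
Proof.
move=> cC.
have [[x0 Cx0]|C0] := pselect (C !=set0); last first.
  by exists 0; split => // x y Cx; case: C0; exists x.
have [M HM] : exists M, forall y, C y -> mdist x0 y <= M.
  apply: contrapT => nb.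
  have H : forall m : nat, exists y, C y /\ m%:R < mdist x0 y.
    move=> m; apply: contrapT => hm; apply: nb; exists m%:R => y Cy.
    rewrite leNgt; apply/negP => hlt; apply: hm; by exists y.
  have [yy Hyy] := choice H.
  have [p [Cp clp]] := cluster_seq cC (fun m => (Hyy m).1).
  have d0 : 0 <= mdist x0 p + 1 by rewrite addr_ge0 // mdist_ge0.
  have [m [Nm hm]] := clp (Num.truncn (mdist x0 p + 1)).+1 1 ltr01.
  have /andP[_ htr] := truncn_itv d0.
  have h1 : ((Num.truncn (mdist x0 p + 1)).+1%:R : R) <= m%:R by rewrite ler_nat.
  have h2 := (Hyy m).2.
  have h3 := mdT p x0 (yy m).
  have : mdist x0 (yy m) < mdist x0 (yy m).
    apply: (le_lt_trans h3); apply: (lt_trans _ h2).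
    apply: (lt_le_trans _ h1); apply: le_lt_trans htr.
    by rewrite lerD2l ltW.
  by rewrite ltxx.
exists (M + M); split.
  have M0 : 0 <= M := le_trans (mdist_ge0 _ _) (HM x0 Cx0).
  by rewrite addr_ge0.
move=> x y Cx Cy; apply: le_trans (mdT x0 x y) _.
by rewrite mdC lerD // HM.
Qed.

End Cl.

Theorem mainTheorem7 (R : realType) (X : metricType R)
  (n : nat -> nat) (f : nat -> nat -> X -> X) (C : set X) :
  complete_space X ->
  (forall i, (0 < n i)%N) ->
  (forall i r, (r < n i)%N -> exists L : R, lipschitz_with L (f i r)) ->
  (fun k => \prod_(i < k) LF n f i) @ \oo --> (0 : R) ->
  compact C ->
  (forall i r, (r < n i)%N -> f i r @` C `<=` C) ->
  cvgn (series (fun k => \prod_(i < k.+1) LF n f i)) ->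
  exists! P : set X,
    P `<=` C /\
    (forall A : set X, A !=set0 -> compact A -> A `<=` C ->
       cvg_H (fun k => Psi n f k A) P).
Proof.
move=> _ hn hlip hp cC hC _.
pose p k := \prod_(i < k) LF n f i.
have p0 : forall k, 0 <= p k.
  by move=> k; rewrite /p prodr_ge0 // => i _; exact: LF_ge0.
have [D [D0 HD]] := compact_bnd cC.
have PsiC : forall k A, A `<=` C -> Psi n f k A `<=` C.
  by move=> k A AC; rewrite PsiE; exact: G_sub.
have Psi0 : forall k A, A !=set0 -> Psi n f k A !=set0.
  by move=> k A A0; rewrite PsiE; exact: G_n0.
have key : forall k A B, A `<=` C -> B !=set0 -> B `<=` C ->
    near_sub (p k * D) (Psi n f k A) (Psi n f k B).
  move=> k A B AC [b Bb] BC; rewrite !PsiE /p -prod_iota.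
  apply: near_G => // a Aa; exists b; split => //; exact: HD _ _ (AC a Aa) (BC b Bb).
have keyl : forall k m A B, (k <= m)%N -> A !=set0 -> A `<=` C -> B !=set0 -> B `<=` C ->
    near_sub (p k * D) (Psi n f m A) (Psi n f k B).
  move=> k m A B km A0 AC B0 BC; rewrite (Psi_split _ _ _ km).
  by apply: key => //; apply: G_sub.
have keyr : forall k m A B, (k <= m)%N -> A !=set0 -> A `<=` C -> B !=set0 -> B `<=` C ->
    near_sub (p k * D) (Psi n f k B) (Psi n f m A).
  move=> k m A B km A0 AC B0 BC; rewrite (Psi_split _ _ _ km).
  by apply: key => //; [apply: G_n0 | apply: G_sub].
have [C0 | Cn0] := pselect (C !=set0); last first.
  exists set0; split.
    split; first by [].
    move=> A [a Aa] _ hAC; case: Cn0; exists a; exact: hAC.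
  move=> P' [P'C _]; apply/seteqP; split => x //= /P'C Cx.
  by case: Cn0; exists x.
pose P := [set x | C x /\ forall k e, 0 < e ->
   exists s, Psi n f k C s /\ mdist x s <= p k * D + e].
have cCl : closed C := compact_closed (@metric_hausdorff _ X) cC.
have approx : forall A, A !=set0 -> A `<=` C -> forall k s, Psi n f k A s ->
    exists x, P x /\ mdist s x <= p k * D.
  move=> A A0 hAC k s hs.
  have Cs : C s := PsiC k A hAC s hs.
  have H : forall m, exists y, C y /\ ((k <= m)%N -> Psi n f m C y /\ mdist s y <= p k * D).
    move=> m; case: (leqP k m) => km.
      have [y [hy dy]] := keyr k m C A km C0 (fun x h => h) A0 hAC s hs.
      by exists y; split => //; exact: PsiC hy.
    by exists s; split => // /(leq_trans km); rewrite ltnn.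
  have [yy Hyy] := choice H.
  have [x [Cx clx]] := cluster_seq cC (fun m => (Hyy m).1).
  exists x; split; last first.
    apply/ler_addgt0Pr => e e0.
    have [m [km hm]] := clx k e e0.
    have [_ dy] := (Hyy m).2 km.
    apply: le_trans (mdT (yy m) s x) _.
    by rewrite lerD // mdC ltW.
  split => // j e e0.
  have [m [km hm]] := clx (maxn j k) e e0.
  have [hym _] := (Hyy m).2 (leq_trans (leq_maxr j k) km).
  have [t [ht dt]] := keyl j m C C (leq_trans (leq_maxl j k) km) C0 (fun x h => h) C0 (fun x h => h) _ hym.
  exists t; split => //.
  apply: le_trans (mdT (yy m) x t) _.
  by rewrite addrC lerD // ltW.
have approx2 : forall A, A !=set0 -> A `<=` C -> forall k x, P x -> forall e, 0 < e ->
    exists a, Psi n f k A a /\ mdist x a <= (p k * D + p k * D) + e.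
  move=> A A0 hAC k x [Cx Px] e e0.
  have [s [hs ds]] := Px k e e0.
  have [a [ha da]] := key k C A (fun x h => h) A0 hAC s hs.
  exists a; split => //.
  apply: le_trans (mdT s x a) _.
  by rewrite addrAC lerD.
have PC : P `<=` C by move=> x [].
have P0 : P !=set0.
  have [c Cc] := C0.
  by have [x [Px _]] := approx C C0 (fun x h => h) 0%N c Cc; exists x.
have Pcl : closed P.
  move=> x clx; split.
    apply: cCl => B nB; have [y [[Cy _] By]] := clx B nB; by exists y.
  move=> k e e0.
  have e20 : 0 < e / 2 by rewrite divr_gt0.
  have [y [[Cy Py] By]] := clx _ (nbhsx_ballx x _ e20).
  have [s [hs ds]] := Py k _ e20.
  exists s; split => //.
  apply: le_trans (mdT y x s) _.
  move: By; rewrite ballEmdist /= => dxy.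
  have := mdist_ge0 x y; lra.
have cP : compact P := subclosed_compact Pcl cC PC.
have hbound : forall A, A !=set0 -> A `<=` C -> forall k,
    0 <= hausdorff (Psi n f k A) P /\ hausdorff (Psi n f k A) P <= (p k * D + p k * D).
  move=> A A0 hAC k.
  have pD0 : 0 <= p k * D by rewrite mulr_ge0.
  have [h1 h2] : 0 <= hdist (Psi n f k A) P /\ hdist (Psi n f k A) P <= p k * D.
    apply: hdist_le => //; first exact: Psi0.
    move=> a ha d d0; have [x [Px dx]] := approx A A0 hAC k a ha.
    exists x; split => //; lra.
  have [h3 h4] : 0 <= hdist P (Psi n f k A) /\ hdist P (Psi n f k A) <= p k * D + p k * D.
    apply: hdist_le => //; first exact: Psi0.
    by move=> x Px d d0; exact: approx2.
  rewrite /hausdorff le_max h1 ge_max h4 andbT; split => //.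
  apply: le_trans h2 _; lra.
have conv : forall A, A !=set0 -> A `<=` C -> cvg_H (fun k => Psi n f k A) P.
  move=> A A0 hAC; split; first by [].
  apply/cvgrPdist_lt => e e0.
  have e'0 : 0 < e / (D + D + 1) by rewrite divr_gt0 // ltr_wpDl // addr_ge0.
  move/cvgrPdist_lt : hp => /(_ _ e'0).
  apply: filterS => k; rewrite sub0r normrN => hk.
  have [hb1 hb2] := hbound A A0 hAC k.
  rewrite sub0r normrN ger0_norm //.
  rewrite ger0_norm // in hk; last exact: p0.
  have : p k * (D + D + 1) < e by rewrite -ltr_pdivlMr // ltr_wpDl // addr_ge0.
  rewrite !mulrDr mulr1 => hlt.
  have := p0 k; move: hb2 hlt; rewrite /p; lra.
exists P; split.
  by split => // A A0 _ hA; exact: conv.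
move=> P' [P'C hP'].
have [[P'0 cP'] hP'C] := hP' C C0 cC (fun x h => h).
have cP'l : closed P' := compact_closed (@metric_hausdorff _ X) cP'.
have ev : forall e, 0 < e -> forall k, exists m, (k <= m)%N /\ p m * D < e /\
    hausdorff (Psi n f m C) P' < e.
  move=> e e0 k.
  have e'0 : 0 < e / (D + 1) by rewrite divr_gt0 // ltr_wpDl.
  have [N1 _ H1] := (cvgrPdist_lt _ _).1 hp _ e'0.
  have [N2 _ H2] := (cvgrPdist_lt _ _).1 hP'C _ e0.
  exists (maxn k (maxn N1 N2)); split; first exact: leq_maxl.
  have hm1 := H1 (maxn k (maxn N1 N2)) (leq_trans (leq_maxl N1 N2) (leq_maxr _ _)).
  have hm2 := H2 (maxn k (maxn N1 N2)) (leq_trans (leq_maxr N1 N2) (leq_maxr _ _)).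
  move: hm1 hm2; set m := maxn k (maxn N1 N2) => /= hm1 hm2.
  have hm1' : `|0 - p m| < e / (D + 1) := hm1.
  move: hm1'; rewrite !sub0r !normrN !ger0_norm //.
  move: hm2; rewrite !sub0r !normrN !ger0_norm //; last first.
    rewrite /hausdorff le_max; apply/orP; left.
    apply: (@hdist_le _ _ D _ _ _ _ _).1 => //; first exact: Psi0.
    move=> a ha d d0; case: P'0 => b hb; exists b; split => //.
    have := HD a b (PsiC _ _ (fun x h => h) a ha) (P'C b hb); lra.
  move=> h2 h1; split => //.
  have : p m * (D + 1) < e by rewrite -ltr_pdivlMr // ltr_wpDl.
  rewrite mulrDr mulr1 => h3; have := p0 m; lra.
apply/seteqP; split => x.
  move=> Px; apply: cP'l => B /nbhs_ballP [e e0 hB].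
  have e30 : 0 < e / 3 by rewrite divr_gt0.
  have [m [_ [hm1 hm2]]] := ev _ e30 0%N.
  have [s [hs ds]] := Px.2 m _ e30.
  have hd : hdist (Psi n f m C) P' < e / 3.
    by apply: le_lt_trans hm2; rewrite /hausdorff le_max lexx.
  have [y [P'y dy]] := hdist_extract (D := D) P'0
    (fun a b ha hb => HD a b (PsiC _ _ (fun x h => h) a ha) (P'C b hb)) hs hd.
  exists y; split => //; apply: hB; rewrite ballEmdist /=.
  have := mdT s x y; lra.
move=> P'x; split; first exact: P'C.
move=> k e e0.
have [m [km [hm1 hm2]]] := ev _ e0 k.
have hd : hdist P' (Psi n f m C) < e.
  by apply: le_lt_trans hm2; rewrite /hausdorff le_max lexx orbT.
have [t [ht dt]] := hdist_extract (D := D) (Psi0 m C C0)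
  (fun a b ha hb => HD a b (P'C a ha) (PsiC _ _ (fun x h => h) b hb)) P'x hd.
have [s [hs ds]] := keyl k m C C km C0 (fun x h => h) C0 (fun x h => h) t ht.
exists s; split => //; have := mdT t x s; lra.
Qed.
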